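(* Let $X=\{u_1x=v_1y,\ u_2z=v_2t,\ w^2+(x+z)(y+t)=0\}\subset\mathbb{P}^1\times\mathbb{P}^1\times\mathbb{P}^4$ and let $\mathbf{G}\subset\mathrm{Aut}(X)$ be the subgroup generated by $\Gamma$ and $\tau_1,\tau_2,\tau_3$. Then (1) $X$ has no $\mathbf{G}$-fixed points; (2) the only $\mathbf{G}$-invariant irreducible curves in $X$ are $C$ and $C'$.
   Context: Coordinates are $([u_1:v_1],[u_2:v_2],[x:y:z:t:w])$. $\tau_1\colon([u_1:v_1],[u_2:v_2],[x:y:z:t:w])\mapsto([v_1:u_1],[v_2:u_2],[y:x:t:z:w])$, $\tau_2\colon\mapsto([u_2:v_2],[u_1:v_1],[z:t:x:y:w])$, $\tau_3\colon\mapsto([u_1:v_1],[u_2:v_2],[x:y:z:t:-w])$. $\Gamma\cong\mathbb{C}^\ast$ consists of the automorphisms $([u_1:v_1],[u_2:v_2],[x:y:z:t:w])\mapsto([u_1/\lambda:\lambda v_1],[u_2/\lambda:\lambda v_2],[\lambda x:y/\lambda:\lambda z:t/\lambda:w])$, $\lambda\in\mathbb{C}^\ast$. $C=\{w=0,\ x+z=0,\ y+t=0,\ u_1z=v_1t,\ u_2z=v_2t,\ v_1u_2=u_1v_2\}$ is the singular curve of $X$, and $C'=X\cap\{x=z,\ t=y\}$. *)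

(* Defs.v *)
From HB Require Import structures.
From mathcomp Require Import all_boot all_order all_algebra.
From mathcomp Require Import reals.
From mathcomp Require Import complex.
From mathcomp Require Import mpoly.

Set Implicit Arguments.
Unset Strict Implicit.
Unset Printing Implicit Defensive.
Import Order.TTheory GRing.Theory Num.Theory.
Local Open Scope ring_scope.

(* A point of P^1 x P^1 x P^4 is represented by a vector v : 'I_9 -> K with
   coordinates (u1,v1,u2,v2,x,y,z,t,w) = (v 0, ..., v 8), such that each of
   the three blocks is nonzero; two representatives define the same point iff
   they differ by independent nonzero scalings of the three blocks. *)
Section Geometry.
Variable K : fieldType.

Definition crd (v : 'I_9 -> K) (k : nat) : K := v (inord k).

Definition nondeg (v : 'I_9 -> K) : Prop :=
  [/\ (crd v 0 != 0) || (crd v 1 != 0),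
      (crd v 2 != 0) || (crd v 3 != 0) &
      [|| crd v 4 != 0, crd v 5 != 0, crd v 6 != 0, crd v 7 != 0 | crd v 8 != 0]].

Definition blk (i : 'I_9) : nat := if (i < 2)%N then 0%N else if (i < 4)%N then 1%N else 2%N.

Definition peq (v v' : 'I_9 -> K) : Prop :=
  exists a b c : K, [/\ a != 0, b != 0, c != 0 &
    forall i : 'I_9, v' i = (if blk i == 0%N then a else if blk i == 1%N then b else c) * v i].

Definition pset := ('I_9 -> K) -> Prop.

Definition psubset (A B : pset) : Prop := forall v, A v -> B v.
Definition peqset (A B : pset) : Prop := forall v, A v <-> B v.
Definition pproper (A B : pset) : Prop := psubset A B /\ exists v, B v /\ ~ A v.

Definition multihom (p : {mpoly K[9]}) : Prop :=
  exists a b c : nat, forall m, m \in msupp p ->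
    [/\ (m (inord 0) + m (inord 1))%N = a,
        (m (inord 2) + m (inord 3))%N = b &
        (m (inord 4) + m (inord 5) + m (inord 6) + m (inord 7) + m (inord 8))%N = c].

Definition zclosed (Z : pset) : Prop :=
  exists S : {mpoly K[9]} -> Prop, (forall p, S p -> multihom p) /\
    forall v, Z v <-> (nondeg v /\ forall p, S p -> p.@[v] = 0).

Definition zirreducible (Z : pset) : Prop :=
  [/\ zclosed Z, exists v, Z v &
      forall Z1 Z2, zclosed Z1 -> zclosed Z2 ->
        psubset Z (fun v => Z1 v \/ Z2 v) -> psubset Z Z1 \/ psubset Z Z2].

(* irreducible curve: irreducible closed subset of (Krull) dimension 1, i.e.
   the longest chain of irreducible closed subsets ending at Z has length 1 *)
Definition irr_curve (Z : pset) : Prop :=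
  [/\ zirreducible Z,
      exists Z0, zirreducible Z0 /\ pproper Z0 Z &
      ~ exists Z0 Z1, [/\ zirreducible Z0, zirreducible Z1, pproper Z0 Z1 & pproper Z1 Z]].

Definition Xset : pset := fun v =>
  [/\ nondeg v,
      crd v 0 * crd v 4 = crd v 1 * crd v 5,
      crd v 2 * crd v 6 = crd v 3 * crd v 7 &
      crd v 8 ^+ 2 + (crd v 4 + crd v 6) * (crd v 5 + crd v 7) = 0].

Definition Cset : pset := fun v =>
  nondeg v /\
  [/\ crd v 8 = 0, crd v 4 + crd v 6 = 0 & crd v 5 + crd v 7 = 0] /\
  [/\ crd v 0 * crd v 6 = crd v 1 * crd v 7,
      crd v 2 * crd v 6 = crd v 3 * crd v 7 &
      crd v 1 * crd v 2 = crd v 0 * crd v 3].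

Definition C'set : pset := fun v =>
  [/\ Xset v, crd v 4 = crd v 6 & crd v 7 = crd v 5].

Definition permute (p : nat -> nat) (v : 'I_9 -> K) : 'I_9 -> K :=
  fun i => crd v (p i).

Definition tau1 := permute (fun i => nth 0%N [:: 1; 0; 3; 2; 5; 4; 7; 6; 8]%N i).
Definition tau2 := permute (fun i => nth 0%N [:: 2; 3; 0; 1; 6; 7; 4; 5; 8]%N i).
Definition tau3 (v : 'I_9 -> K) : 'I_9 -> K :=
  fun i => if val i == 8%N then - v i else v i.
Definition gamma (l : K) (v : 'I_9 -> K) : 'I_9 -> K :=
  fun i => nth 0 [:: l^-1; l; l^-1; l; l; l^-1; l; l^-1; 1] i * v i.

Definition generator (g : ('I_9 -> K) -> ('I_9 -> K)) : Prop :=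
  [\/ g = tau1, g = tau2, g = tau3 | exists2 l : K, l != 0 & g = gamma l].

(* the group G generated by Gamma and tau1, tau2, tau3 (each generator has its
   inverse among the generators, so the generated monoid is the group) *)
Inductive inG : (('I_9 -> K) -> ('I_9 -> K)) -> Prop :=
  | inG_id : inG id
  | inG_gen g : generator g -> inG g
  | inG_comp g h : inG g -> inG h -> inG (g \o h).

Definition G_fixed_point (v : 'I_9 -> K) : Prop :=
  Xset v /\ forall g, inG g -> peq v (g v).

Definition G_invariant (Z : pset) : Prop :=
  forall g, inG g -> forall v, nondeg v -> (Z (g v) <-> Z v).

End Geometry.

(* Main.v *)
Require Import Defs.
From HB Require Import structures.
From mathcomp Require Import all_boot all_order all_algebra.
From mathcomp Require Import reals.
From mathcomp Require Import complex.
From mathcomp Require Import mpoly.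
From mathcomp Require Import ring zify.
From Stdlib Require Import Lia.
From Stdlib Require Import Classical FunctionalExtensionality PropExtensionality.

Set Implicit Arguments.
Unset Strict Implicit.
Unset Printing Implicit Defensive.
Import Order.TTheory GRing.Theory Num.Theory.
Local Open Scope ring_scope.


From HB Require Import structures.
From mathcomp Require Import all_boot all_order all_algebra.
From mathcomp Require Import reals.
From mathcomp Require Import complex.
From mathcomp Require Import mpoly.
From mathcomp Require Import ring.
From Stdlib Require Import Classical FunctionalExtensionality PropExtensionality.

Set Implicit Arguments.
Unset Strict Implicit.
Unset Printing Implicit Defensive.
Import Order.TTheory GRing.Theory Num.Theory.
Local Open Scope ring_scope.

Section A.
Variable K : numClosedFieldType.
Local Notation V := ('I_9 -> K).

Lemma forall9 (Pr : 'I_9 -> Prop) :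
  Pr (inord 0) -> Pr (inord 1) -> Pr (inord 2) -> Pr (inord 3) -> Pr (inord 4) ->
  Pr (inord 5) -> Pr (inord 6) -> Pr (inord 7) -> Pr (inord 8) -> forall i, Pr i.
Proof.
move=> h0 h1 h2 h3 h4 h5 h6 h7 h8 i; rewrite -(inord_val i).
by case: i => [[|[|[|[|[|[|[|[|[|//]]]]]]]]] Hi] /=.
Qed.

Lemma prod9 (F : 'I_9 -> K) : \prod_(i < 9) F i =
  F (inord 0) * (F (inord 1) * (F (inord 2) * (F (inord 3) * (F (inord 4) *
  (F (inord 5) * (F (inord 6) * (F (inord 7) * F (inord 8)))))))).
Proof.
rewrite !big_ord_recl big_ord0 mulr1.
by repeat congr (_ * _)%R; apply: congr1; apply: val_inj; rewrite /= inordK.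
Qed.

Definition lsc (a b c : K) := [:: a; a; b; b; c; c; c; c; c].

Lemma peq_crd (v w : V) : peq v w <-> exists a b c : K, [/\ a != 0, b != 0, c != 0 &
  forall k, (k < 9)%N -> crd w k = nth 0 (lsc a b c) k * crd v k].
Proof.
split.
  move=> [a [b [c [ha hb hc h]]]]; exists a, b, c; split => // k hk.
  rewrite /crd h /blk inordK //.
  by case: k hk => [|[|[|[|[|[|[|[|[|//]]]]]]]]].
move=> [a [b [c [ha hb hc h]]]]; exists a, b, c; split => //.
apply: forall9; rewrite /blk ?inordK //=; by apply: h.
Qed.

Lemma peq_refl (v : V) : peq v v.
Proof.
apply/peq_crd; exists 1, 1, 1; split; rewrite ?oner_eq0 // => k hk.
by case: k hk => [|[|[|[|[|[|[|[|[|//]]]]]]]]] _ /=; rewrite mul1r.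
Qed.

Lemma peq_sym (v w : V) : peq v w -> peq w v.
Proof.
move=> /peq_crd [a [b [c [ha hb hc h]]]]; apply/peq_crd.
exists a^-1, b^-1, c^-1; split; rewrite ?invr_eq0 // => k hk.
rewrite h //.
by case: k hk => [|[|[|[|[|[|[|[|[|//]]]]]]]]] _ /=; rewrite mulrA mulVf ?mul1r.
Qed.

Lemma peq_trans (u v w : V) : peq u v -> peq v w -> peq u w.
Proof.
move=> /peq_crd [a [b [c [ha hb hc h]]]] /peq_crd [a' [b' [c' [ha' hb' hc' h']]]].
apply/peq_crd; exists (a' * a), (b' * b), (c' * c); split; rewrite ?mulf_neq0 // => k hk.
rewrite h' // h //.
by case: k hk => [|[|[|[|[|[|[|[|[|//]]]]]]]]] _ /=; rewrite mulrA.
Qed.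

Lemma peq_nondeg (v w : V) : peq v w -> nondeg v -> nondeg w.
Proof.
move=> /peq_crd [a [b [c [ha hb hc h]]]].
rewrite /nondeg !h //= !mulf_eq0 (negbTE ha) (negbTE hb) (negbTE hc) /=.
by [].
Qed.

End A.

Section B.
Variable K : numClosedFieldType.
Local Notation V := ('I_9 -> K).
Local Notation mp := {mpoly K[9]}.

Definition mhom (a b c : nat) (p : mp) := forall m, m \in msupp p ->
    [/\ (m (inord 0) + m (inord 1))%N = a,
        (m (inord 2) + m (inord 3))%N = b &
        (m (inord 4) + m (inord 5) + m (inord 6) + m (inord 7) + m (inord 8))%N = c].

Lemma mhom_multihom a b c (p : mp) : mhom a b c p -> multihom p.
Proof. by move=> h; exists a, b, c. Qed.

Lemma mhomD a b c (p q : mp) : mhom a b c p -> mhom a b c q -> mhom a b c (p + q).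
Proof. by move=> hp hq m /msuppD_le; rewrite mem_cat => /orP [/hp|/hq]. Qed.

Lemma mhomB a b c (p q : mp) : mhom a b c p -> mhom a b c q -> mhom a b c (p - q).
Proof. by move=> hp hq m /msuppB_le; rewrite mem_cat => /orP [/hp|/hq]. Qed.

Lemma mhomZ a b c k (p : mp) : mhom a b c p -> mhom a b c (k *: p).
Proof. by move=> hp m /msuppZ_le /hp. Qed.

Lemma mhom0 a b c : mhom a b c (0 : mp).
Proof. by move=> m; rewrite mcoeff_msupp mcoeff0 eqxx. Qed.

Lemma mhomM a b c a' b' c' (p q : mp) : mhom a b c p -> mhom a' b' c' q ->
  mhom (a + a') (b + b') (c + c') (p * q).
Proof.
move=> hp hq m /msuppM_le /allpairsP [[m1 m2] [/= /hp [h1 h2 h3] /hq [h1' h2' h3'] ->]].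
rewrite !mnmDE; split.
- by rewrite -h1 -h1' addnACA.
- by rewrite -h2 -h2' addnACA.
- rewrite -h3 -h3'; lia.
Qed.

Lemma mhom1 : mhom 0 0 0 (1 : mp).
Proof. by move=> m; rewrite msupp1 inE => /eqP ->; rewrite !mnm0E. Qed.

Lemma inord_eqE (k j : nat) : (k < 9)%N -> (j < 9)%N ->
  ((inord k : 'I_9) == inord j) = (k == j).
Proof. by move=> hk hj; rewrite -val_eqE /= !inordK. Qed.

Lemma mhomX k : (k < 9)%N ->
  mhom (k < 2)%N ((1 < k) && (k < 4))%N (3 < k)%N ('X_(inord k) : mp).
Proof.
move=> hk m; rewrite msuppX inE => /eqP ->; rewrite !mnm1E !inord_eqE //.
by case: k hk => [|[|[|[|[|[|[|[|[|//]]]]]]]]].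
Qed.

Lemma multihomM (p q : mp) : multihom p -> multihom q -> multihom (p * q).
Proof.
move=> [a [b [c hp]]] [a' [b' [c' hq]]].
exact: (mhom_multihom (mhomM hp hq)).
Qed.

Lemma multihom1 : multihom (1 : mp).
Proof. exact: mhom_multihom mhom1. Qed.

Lemma meval_peq (v w : V) a b c (p : mp) : peq v w -> mhom a b c p ->
  exists k : K, k != 0 /\ p.@[w] = k * p.@[v].
Proof.
move=> [x [y [z [hx hy hz h]]]] hp.
exists (x ^+ a * y ^+ b * z ^+ c); split; first by rewrite !mulf_neq0 // expf_neq0.
rewrite !mevalE big_distrr /= !big_seq; apply: eq_bigr => m hm.
rewrite mulrCA; congr (_ * _).
rewrite (eq_bigr (fun i => (if blk i == 0%N then x else if blk i == 1%N then y else z) ^+ m i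
   * v i ^+ m i)); last by move=> i _; rewrite h exprMn.
rewrite big_split /=; congr (_ * _).
have [h1 h2 h3] := hp m hm.
rewrite prod9 /blk !inordK //= -h1 -h2 -h3 !exprD.
ring.
Qed.

Lemma meval_peq0 (v w : V) (p : mp) : peq v w -> multihom p ->
  (p.@[v] = 0 <-> p.@[w] = 0).
Proof.
move=> hvw [a [b [c hp]]]; have [k [hk ->]] := meval_peq hvw hp.
split => [->|/eqP]; first by rewrite mulr0.
by rewrite mulf_eq0 (negbTE hk) /= => /eqP.
Qed.

Lemma zclosed_nondeg (Z : pset K) v : zclosed Z -> Z v -> nondeg v.
Proof. by move=> [S [_ hZ]] /hZ []. Qed.

Lemma zclosed_sep (Z : pset K) v : zclosed Z -> nondeg v -> ~ Z v ->
  exists p : mp, [/\ multihom p, (forall w, Z w -> p.@[w] = 0) & p.@[v] != 0].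
Proof.
move=> [S [hS hZ]] nd nZ.
case: (classic (exists p, S p /\ p.@[v] != 0)) => [[p [Sp hp]]|hno].
  exists p; split => //; first exact: hS.
  by move=> w /hZ [_ ]; apply.
exfalso; apply: nZ; apply/hZ; split => // p Sp.
case: (eqVneq (p.@[v]) 0) => // hp; case: hno; by exists p.
Qed.

Lemma zclosed_in (Z : pset K) v : zclosed Z -> nondeg v ->
  (forall p : mp, multihom p -> (forall w, Z w -> p.@[w] = 0) -> p.@[v] = 0) -> Z v.
Proof.
move=> hZ nd h; apply: NNPP => nZ.
have [p [hp hw hv]] := zclosed_sep hZ nd nZ.
by move: hv; rewrite h ?eqxx.
Qed.

Lemma zclosed_peq (Z : pset K) v w : zclosed Z -> Z v -> peq v w -> Z w.
Proof.
move=> hZ Zv hvw; have nd := zclosed_nondeg hZ Zv.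
apply: (zclosed_in hZ (peq_nondeg hvw nd)) => p hp h.
by apply/(meval_peq0 hvw hp); apply: h.
Qed.

Definition cl (S : pset K) : pset K := fun v =>
  nondeg v /\ forall p : mp, multihom p -> (forall s, S s -> p.@[s] = 0) -> p.@[v] = 0.

Lemma cl_closed S : zclosed (cl S).
Proof.
exists (fun p => multihom p /\ forall s, S s -> p.@[s] = 0); split; first by move=> p [].
move=> v; split => [[nd h]|[nd h]]; split => // p.
  by move=> [hp hs]; apply: h.
by move=> hp hs; apply: h.
Qed.

Lemma cl_min (S Z : pset K) : zclosed Z -> (forall s, S s -> Z s) -> psubset (cl S) Z.
Proof.
move=> hZ hS v [nd h]; apply: (zclosed_in hZ nd) => p hp hw.
by apply: h => // s /hS; apply: hw.
Qed.

Lemma cl_in (S : pset K) v : S v -> nondeg v -> cl S v.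
Proof. by move=> Sv nd; split => // p _; apply. Qed.

Lemma zclosedU (Z1 Z2 : pset K) : zclosed Z1 -> zclosed Z2 ->
  zclosed (fun v => Z1 v \/ Z2 v).
Proof.
move=> h1 h2.
exists (fun p => exists f g, [/\ multihom f, multihom g,
   (forall w, Z1 w -> f.@[w] = 0), (forall w, Z2 w -> g.@[w] = 0) & p = f * g]).
split; first by move=> p [f [g [hf hg _ _ ->]]]; apply: multihomM.
move=> v; split.
  move=> hv; split; first by case: hv => [/(zclosed_nondeg h1)|/(zclosed_nondeg h2)].
  move=> p [f [g [hf hg hf0 hg0 ->]]]; rewrite mevalM.
  by case: hv => [/hf0 ->|/hg0 ->]; rewrite ?mul0r ?mulr0.
move=> [nd h]; apply: NNPP => /not_or_and [n1 n2].
have [f [hf hf0 hfv]] := zclosed_sep h1 nd n1.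
have [g [hg hg0 hgv]] := zclosed_sep h2 nd n2.
have := h (f * g); rewrite mevalM => /(_ (ex_intro _ f (ex_intro _ g (And5 hf hg hf0 hg0 erefl)))).
by move/eqP; rewrite mulf_eq0 (negbTE hfv) (negbTE hgv).
Qed.

Definition ev (P : 'I_9 -> {poly K}) (s : K) : V := fun i => (P i).[s].

Lemma mpoly_poly (P : 'I_9 -> {poly K}) (f : mp) :
  exists F : {poly K}, forall s, F.[s] = f.@[ev P s].
Proof.
exists (mmap (@polyC K) P f) => s.
rewrite /mmap mevalE horner_sum; apply: eq_bigr => m _.
rewrite hornerCM /mmap1 horner_prod; congr (_ * _).
by apply: eq_bigr => i _; rewrite horner_exp.
Qed.

Lemma poly_zero (F : {poly K}) : (forall s, s != 0 -> F.[s] = 0) -> F = 0.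
Proof.
move=> h.
apply: (@roots_geq_poly_eq0 _ F [seq (i.+1)%:R : K | i <- iota 0 (size F)]).
- apply/allP => x /mapP [i _ ->]; apply/rootP; apply: h.
  by rewrite pnatr_eq0.
- rewrite map_inj_uniq ?iota_uniq // => i j /eqP; rewrite eqr_nat => /eqP [].
  by [].
- by rewrite size_map size_iota.
Qed.

Lemma ev_ext (P : 'I_9 -> {poly K}) (f : mp) :
  (forall s, s != 0 -> f.@[ev P s] = 0) -> forall s, f.@[ev P s] = 0.
Proof.
move=> h s; have [F hF] := mpoly_poly P f.
rewrite -hF (poly_zero (F := F)) ?horner0 // => t ht.
by rewrite hF h.
Qed.

Definition curveS (P : 'I_9 -> {poly K}) : pset K := fun v => exists2 s, s != 0 & v = ev P s.

Lemma cl_curve_irr (P : 'I_9 -> {poly K}) :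
  (forall s, s != 0 -> nondeg (ev P s)) -> zirreducible (cl (curveS P)).
Proof.
move=> hnd; split; first exact: cl_closed.
  exists (ev P 1); apply: cl_in; last by apply: hnd; rewrite oner_eq0.
  by exists 1; rewrite ?oner_eq0.
move=> Z1 Z2 h1 h2 hsub.
apply: NNPP => /not_or_and [n1 n2].
have [v1 [Sv1 nv1]] : exists v, cl (curveS P) v /\ ~ Z1 v.
  by apply: NNPP => hn; apply: n1 => v Sv; apply: NNPP => nv; apply: hn; exists v.
have [v2 [Sv2 nv2]] : exists v, cl (curveS P) v /\ ~ Z2 v.
  by apply: NNPP => hn; apply: n2 => v Sv; apply: NNPP => nv; apply: hn; exists v.
have [f [hf hf0 hfv]] := zclosed_sep h1 Sv1.1 nv1.
have [g [hg hg0 hgv]] := zclosed_sep h2 Sv2.1 nv2.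
have [F hF] := mpoly_poly P f.
have [G hG] := mpoly_poly P g.
have : F * G = 0.
  apply: poly_zero => s hs; rewrite hornerM hF hG.
  have : cl (curveS P) (ev P s) by apply: cl_in; [exists s | apply: hnd].
  by move/hsub => [/hf0 ->|/hg0 ->]; rewrite ?mul0r ?mulr0.
move/eqP; rewrite mulf_eq0 => /orP [/eqP F0|/eqP G0].
  move: hfv; rewrite (proj2 Sv1 f hf) ?eqxx // => s [t ht ->].
  by rewrite -hF F0 horner0.
move: hgv; rewrite (proj2 Sv2 g hg) ?eqxx // => s [t ht ->].
by rewrite -hG G0 horner0.
Qed.

Lemma cl_point_irr (p : V) : nondeg p -> zirreducible (cl (fun v => v = p)).
Proof.
move=> nd; split; first exact: cl_closed.
  by exists p; apply: cl_in.
move=> Z1 Z2 h1 h2 hsub.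
have : cl (fun v => v = p) p by apply: cl_in.
move/hsub => [Z1p|Z2p]; [left|right]; apply: cl_min => // s ->; done.
Qed.

End B.

Section C.
Variable K : numClosedFieldType.
Local Notation V := ('I_9 -> K).
Local Notation mp := {mpoly K[9]}.

Definition bk (k : nat) := ((k < 2)%N, ((1 < k) && (k < 4))%N, (3 < k)%N).

Lemma minor_sep (q v : V) (i j : nat) : (i < 9)%N -> (j < 9)%N -> bk i = bk j ->
  crd q i * crd v j != crd q j * crd v i ->
  exists f : mp, [/\ multihom f, f.@[q] = 0 & f.@[v] != 0].
Proof.
move=> hi hj hb hne.
exists (crd q i *: 'X_(inord j) - crd q j *: 'X_(inord i)); split.
- apply: (@mhom_multihom _ (j < 2)%N ((1 < j) && (j < 4))%N (3 < j)%N).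
  apply: mhomB; apply: mhomZ; first exact: mhomX.
  have := mhomX hi; move: hb; rewrite /bk => -[-> -> ->]; exact.
- by rewrite mevalB !mevalZ !mevalXU /crd mulrC subrr.
- by rewrite mevalB !mevalZ !mevalXU subr_eq0.
Qed.

Lemma block_scale (q v : nat -> K) (I : seq nat) :
  has (fun k => q k != 0) I -> has (fun k => v k != 0) I ->
  (forall i j, i \in I -> j \in I -> q i * v j = q j * v i) ->
  exists2 a, a != 0 & forall i, i \in I -> v i = a * q i.
Proof.
move=> /hasP [k kI qk] /hasP [k' k'I vk'] hm.
have E i : i \in I -> v i = v k / q k * q i.
  move=> iI; have := hm k i kI iI.
  by move=> h; apply: (mulfI qk); rewrite h; field.
exists (v k / q k); last exact: E.
rewrite mulf_eq0 invr_eq0 (negbTE qk) orbF; apply/eqP => vk0.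
by move: vk'; rewrite E // vk0 !mul0r eqxx.
Qed.

Lemma sep_point (q v : V) : nondeg q -> nondeg v -> ~ peq q v ->
  exists f : mp, [/\ multihom f, f.@[q] = 0 & f.@[v] != 0].
Proof.
move=> [q1 q2 q3] [v1 v2 v3] npeq; apply: NNPP => nof.
have hm : forall i j, (i < 9)%N -> (j < 9)%N -> bk i = bk j ->
    crd q i * crd v j = crd q j * crd v i.
  move=> i j hi hj hb; apply/eqP; apply: contraT => hne.
  by case: nof; apply: (minor_sep hi hj hb hne).
have hI (I : seq nat) : all (fun k => (k < 9)%N && (bk k == bk (head 0%N I))) I ->
    forall i j, i \in I -> j \in I -> crd q i * crd v j = crd q j * crd v i.
  move=> /allP hall i j /hall /andP [hi /eqP bi] /hall /andP [hj /eqP bj].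
  by apply: hm => //; rewrite bi bj.
have hq1 : has (fun k => crd q k != 0) [:: 0; 1]%N by rewrite /= orbF.
have hv1 : has (fun k => crd v k != 0) [:: 0; 1]%N by rewrite /= orbF.
have hq2 : has (fun k => crd q k != 0) [:: 2; 3]%N by rewrite /= orbF.
have hv2 : has (fun k => crd v k != 0) [:: 2; 3]%N by rewrite /= orbF.
have hq3 : has (fun k => crd q k != 0) [:: 4; 5; 6; 7; 8]%N by rewrite /= orbF.
have hv3 : has (fun k => crd v k != 0) [:: 4; 5; 6; 7; 8]%N by rewrite /= orbF.
have [a ha Ea] := block_scale hq1 hv1 (hI [:: 0; 1]%N isT).
have [b hb Eb] := block_scale hq2 hv2 (hI [:: 2; 3]%N isT).
have [c hc Ec] := block_scale hq3 hv3 (hI [:: 4; 5; 6; 7; 8]%N isT).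
apply: npeq; apply/peq_crd; exists a, b, c; split => // k hk.
case: k hk => [|[|[|[|[|[|[|[|[|//]]]]]]]]] _ /=;
  by [apply: Ea | apply: Eb | apply: Ec].
Qed.

Lemma sep_list (qs : seq V) (v : V) : nondeg v ->
  (forall q, List.In q qs -> nondeg q /\ ~ peq q v) ->
  exists f : mp, [/\ multihom f, (forall q, List.In q qs -> f.@[q] = 0) & f.@[v] != 0].
Proof.
move=> nd; elim: qs => [|q qs IH] h.
  by exists 1; split; [exact: multihom1 | by [] | rewrite meval1 oner_eq0].
have [f [hf hf0 hfv]] : exists f : mp, [/\ multihom f, (forall q, List.In q qs -> f.@[q] = 0) & f.@[v] != 0].
  by apply: IH => q' hq'; apply: h; right.
have [nq npq] := h q (or_introl erefl).
have [g [hg hg0 hgv]] := sep_point nq nd npq.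
exists (g * f); split; first exact: multihomM.
  move=> q' hq'; rewrite mevalM; case: hq' => [<-|/hf0 ->]; by rewrite ?hg0 ?mul0r ?mulr0.
by rewrite mevalM mulf_neq0.
Qed.

Lemma cl_list (qs : seq V) (v : V) : (forall q, List.In q qs -> nondeg q) ->
  cl (fun w => List.In w qs) v -> exists q, List.In q qs /\ peq q v.
Proof.
move=> hq [nd hv]; apply: NNPP => hno.
have [f [hf hf0 hfv]] := @sep_list qs v nd (fun q hq' => conj (hq q hq') (fun hp => hno (ex_intro _ q (conj hq' hp)))).
by move: hfv; rewrite hv ?eqxx.
Qed.

Lemma cl_peq (S : pset K) (s v : V) : S s -> nondeg s -> peq s v -> cl S v.
Proof. by move=> Ss nd hp; apply: (zclosed_peq (cl_closed S) (cl_in Ss nd) hp). Qed.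

Lemma irr_in_list (Z : pset K) (qs : seq V) : zirreducible Z ->
  (forall q, List.In q qs -> nondeg q) ->
  (forall v, Z v -> exists q, List.In q qs /\ peq q v) ->
  exists q, forall v, Z v -> peq q v.
Proof.
move=> hZ; elim: qs => [|q qs IH] hnd hcov.
  by case: hZ => _ [v Zv] _; have [q [[] _]] := hcov v Zv.
have hq : nondeg q by apply: hnd; left.
have hsub : psubset Z (fun v => cl (fun w => List.In w [:: q]) v \/ cl (fun w => List.In w qs) v).
  move=> v Zv; have [q' [[<-|hin] hp]] := hcov v Zv.
    by left; apply: (cl_peq (s := q)) => //; left.
  by right; apply: (cl_peq (s := q')) => //; apply: hnd; right.
case: hZ => hcl hne hirr.
case: (hirr _ _ (cl_closed _) (cl_closed _) hsub) => hZs.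
  exists q => v /hZs /cl_list [q0 /= hq0|q0 [[<-|[]] hp]] //.
  by case: hq0 => [<-|[]].
apply: IH => [q0 hq0|v /hZs]; first by apply: hnd; right.
by apply: cl_list => q0 hq0; apply: hnd; right.
Qed.

End C.

Lemma pset_ext (K : fieldType) (Z Z' : pset K) : (forall v, Z v <-> Z' v) -> Z = Z'.
Proof.
move=> h; apply: functional_extensionality => v.
by apply: propositional_extensionality.
Qed.

Section D.
Variable K : numClosedFieldType.
Local Notation V := ('I_9 -> K).
Local Notation mp := {mpoly K[9]}.

Lemma in_map_ev (Q : 'I_9 -> {poly K}) (rs : seq K) s :
  s \in rs -> List.In (ev Q s) (map (ev Q) rs).
Proof.
elim: rs => //= r rs IH; rewrite inE => /orP [/eqP ->|/IH]; by [left | right].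
Qed.

Lemma cl_point_irr' (p : V) : nondeg p -> zirreducible (cl (fun w => List.In w [:: p])).
Proof.
move=> nd; split; first exact: cl_closed.
  by exists p; apply: cl_in => //; left.
move=> Z1 Z2 h1 h2 hsub.
have : cl (fun w => List.In w [:: p]) p by apply: cl_in => //; left.
by move/hsub => [Z1p|Z2p]; [left|right]; apply: cl_min => // s [<-|[]].
Qed.

Variables (Zc : pset K) (P P' : 'I_9 -> {poly K}).
Hypothesis hZc : zclosed Zc.
Hypothesis hP : forall s, Zc (ev P s).
Hypothesis hP' : forall s, Zc (ev P' s).
Hypothesis h3 : forall v, Zc v -> (exists s, peq (ev P s) v) \/ peq (ev P' 0) v.
Hypothesis h4 : forall v, Zc v -> (exists s, peq (ev P' s) v) \/ peq (ev P 0) v.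
Hypothesis h5 : forall s, s != 0 -> peq (ev P s) (ev P' s^-1).
Hypothesis h6 : ~ peq (ev P 0) (ev P' 0).

Lemma curve_eq_cl v : Zc v <-> cl (curveS P) v.
Proof.
split; last by apply: cl_min => // w [s _ ->].
move=> Zv; split; first exact: (zclosed_nondeg hZc Zv).
move=> p hp hp0.
have hall : forall s, p.@[ev P s] = 0.
  by apply: ev_ext => s hs; apply: hp0; exists s.
case: (h3 Zv) => [[s hs]|hs]; first by apply/(meval_peq0 hs hp).
apply/(meval_peq0 hs hp); apply: ev_ext => t ht.
have := h5 (invr_neq0 ht); rewrite invrK => hpe.
by apply/(meval_peq0 hpe hp).
Qed.

Lemma curve_irr : zirreducible Zc.
Proof.
rewrite (pset_ext curve_eq_cl); apply: cl_curve_irr => s _.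
exact: (zclosed_nondeg hZc (hP s)).
Qed.

Lemma curve_sub_irr : exists Z0, zirreducible Z0 /\ pproper Z0 Zc.
Proof.
have nd0 : nondeg (ev P 0) by exact: (zclosed_nondeg hZc (hP 0)).
exists (cl (fun w => List.In w [:: ev P 0])); split; first exact: cl_point_irr'.
split; first by apply: cl_min => // s [<-|[]].
exists (ev P' 0); split => // /cl_list [].
  by move=> q [<-|[]].
by move=> q [[<-|[]] hq].
Qed.

Lemma chain_aux (Q : 'I_9 -> {poly K}) (e : V) (Z1 : pset K) (v : V) (s0 : K) :
  (forall s, nondeg (ev Q s)) -> nondeg e -> zirreducible Z1 -> psubset Z1 Zc ->
  Zc v -> ~ Z1 v -> peq (ev Q s0) v ->
  (forall w, Zc w -> (exists s, peq (ev Q s) w) \/ peq e w) ->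
  exists q, forall w, Z1 w -> peq q w.
Proof.
move=> hQ he hZ1 hsub Zv nZ1v hv hcov.
have Z1c : zclosed Z1 by case: hZ1.
have ndv : nondeg v by exact: (zclosed_nondeg hZc Zv).
have [f [hf hf0 hfv]] := zclosed_sep Z1c ndv nZ1v.
have [F hF] := mpoly_poly Q f.
have F0 : F != 0.
  apply/eqP => F0; move: hfv; apply/negP; rewrite negbK; apply/eqP.
  by apply/(meval_peq0 hv hf); rewrite -hF F0 horner0.
have [rs Frs] := closed_field_poly_normal F.
apply: (@irr_in_list _ Z1 (e :: map (ev Q) rs)) => //.
  by move=> q [<-|]; [done | elim: rs {Frs} => //= r rs IH [<-|/IH]].
move=> w Z1w; case: (hcov w (hsub w Z1w)) => [[s hs]|hs]; last by exists e; split => //; left.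
exists (ev Q s); split => //; right; apply: in_map_ev.
have : root F s.
  by apply/rootP; rewrite hF; apply/(meval_peq0 hs hf); apply: hf0.
by rewrite Frs rootZ ?lead_coef_eq0 // root_prod_XsubC.
Qed.

Lemma curve_no_chain : ~ exists Z0 Z1, [/\ zirreducible Z0, zirreducible Z1, pproper Z0 Z1 & pproper Z1 Zc].
Proof.
move=> [Z0 [Z1 [hZ0 hZ1 [s01 [w [Z1w nZ0w]]] [s1c [v [Zcv nZ1v]]]]]].
have ndP s : nondeg (ev P s) by exact: (zclosed_nondeg hZc (hP s)).
have ndP' s : nondeg (ev P' s) by exact: (zclosed_nondeg hZc (hP' s)).
have [q hq] : exists q, forall w, Z1 w -> peq q w.
  case: (h3 Zcv) => [[s0 hs0]|hs0].
    by apply: (@chain_aux P (ev P' 0) Z1 v s0).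
  by apply: (@chain_aux P' (ev P 0) Z1 v 0).
case: hZ0 => Z0c [z0 Z0z0] _.
apply: nZ0w; apply: (zclosed_peq Z0c Z0z0).
exact: (peq_trans (peq_sym (hq z0 (s01 z0 Z0z0))) (hq w Z1w)).
Qed.

Lemma curve_irr_curve : irr_curve Zc.
Proof.
split; [exact: curve_irr | exact: curve_sub_irr | exact: curve_no_chain].
Qed.

Lemma curve_unique (Z : pset K) : irr_curve Z -> psubset Z Zc -> forall v, Z v <-> Zc v.
Proof.
move=> [hZ [Z0 [hZ0 pZ0]] _] hsub v; split; first exact: hsub.
move=> Zcv; apply: NNPP => nZv; apply: curve_no_chain.
exists Z0, Z; split => //; split => //; by exists v.
Qed.

End D.

Section E.
Variable K : numClosedFieldType.
Local Notation V := ('I_9 -> K).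
Local Notation mp := {mpoly K[9]}.

Lemma crd_tau1 (v : V) k : (k < 9)%N ->
  crd (tau1 v) k = crd v (nth 0%N [:: 1; 0; 3; 2; 5; 4; 7; 6; 8]%N k).
Proof. by move=> hk; rewrite {1}/crd /tau1 /permute inordK. Qed.

Lemma crd_tau2 (v : V) k : (k < 9)%N ->
  crd (tau2 v) k = crd v (nth 0%N [:: 2; 3; 0; 1; 6; 7; 4; 5; 8]%N k).
Proof. by move=> hk; rewrite {1}/crd /tau2 /permute inordK. Qed.

Lemma crd_tau3 (v : V) k : (k < 9)%N ->
  crd (tau3 v) k = if k == 8%N then - crd v k else crd v k.
Proof. by move=> hk; rewrite {1}/crd /tau3 /= inordK. Qed.

Lemma crd_gamma l (v : V) k : (k < 9)%N ->
  crd (gamma l v) k = nth 0 [:: l^-1; l; l^-1; l; l; l^-1; l; l^-1; 1] k * crd v k.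
Proof. by move=> hk; rewrite {1}/crd /gamma inordK. Qed.

Lemma crd_ev (l : seq {poly K}) s k : (k < 9)%N ->
  crd (ev (fun i : 'I_9 => nth 0 l i) s) k = (nth 0 l k).[s].
Proof. by move=> hk; rewrite /crd /ev /= inordK. Qed.

Lemma gen_nondeg g (v : V) : generator g -> nondeg v -> nondeg (g v).
Proof.
case=> [->|->|->|[l hl ->]]; rewrite /nondeg ?crd_tau1 ?crd_tau2 ?crd_tau3 ?crd_gamma //=.
- by case=> h1 h2 h3; move: h1 h2 h3; case: (crd v 0 != 0); case: (crd v 1 != 0); case: (crd v 2 != 0); case: (crd v 3 != 0); case: (crd v 4 != 0); case: (crd v 5 != 0); case: (crd v 6 != 0); case: (crd v 7 != 0); case: (crd v 8 != 0);  done.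
- by case=> h1 h2 h3; move: h1 h2 h3; case: (crd v 0 != 0); case: (crd v 1 != 0); case: (crd v 2 != 0); case: (crd v 3 != 0); case: (crd v 4 != 0); case: (crd v 5 != 0); case: (crd v 6 != 0); case: (crd v 7 != 0); case: (crd v 8 != 0);  done.
- by rewrite oppr_eq0.
- by rewrite !mulf_eq0 !invr_eq0 (negbTE hl) oner_eq0.
Qed.

Lemma inG_nondeg g (v : V) : inG g -> nondeg v -> nondeg (g v).
Proof.
move=> hg; elim: hg v => [//|g' hg' v|g' h _ IHg _ IHh v] nd.
  exact: gen_nondeg.
by apply: IHg; apply: IHh.
Qed.

Lemma G_inv_of (Z : pset K) :
  (forall g, generator g -> forall v, nondeg v -> (Z (g v) <-> Z v)) -> G_invariant Z.
Proof.
move=> hgen g hg; elim: hg => [//|g' hg' v nd|g' h hg IHg hh IHh v nd].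
  exact: hgen.
rewrite /= IHg; first exact: IHh.
exact: (inG_nondeg hh).
Qed.

Lemma eqk (k A B C D : K) : k != 0 -> A - B = k * (C - D) -> (A = B <-> C = D).
Proof.
move=> hk h; split => [e|e].
  by apply/eqP; rewrite -subr_eq0; move: h; rewrite e subrr => /esym/eqP; rewrite mulf_eq0 (negbTE hk).
by apply/eqP; rewrite -subr_eq0 h e subrr mulr0.
Qed.

Lemma and4_iff (P Q R S P' Q' R' S' : Prop) : (P <-> P') -> (Q <-> Q') -> (R <-> R') -> (S <-> S') ->
  ([/\ P, Q, R & S] <-> [/\ P', Q', R' & S']).
Proof. by move=> h1 h2 h3 h4; split => -[/h1 ? /h2 ? /h3 ? /h4 ?]. Qed.

Lemma and3_iff (P Q R P' Q' R' : Prop) : (P <-> P') -> (Q <-> Q') -> (R <-> R') ->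
  ([/\ P, Q & R] <-> [/\ P', Q' & R']).
Proof. by move=> h1 h2 h3; split => -[/h1 ? /h2 ? /h3 ?]. Qed.

Lemma and_iff (P Q P' Q' : Prop) : (P <-> P') -> (Q <-> Q') -> (P /\ Q <-> P' /\ Q').
Proof. by move=> h1 h2; split => -[/h1 ? /h2 ?]. Qed.

Ltac eqk_tac := first
  [ apply: (eqk (k := 1)); [by rewrite oner_eq0 | by ring]
  | apply: (eqk (k := -1)); [by rewrite oppr_eq0 oner_eq0 | by ring] ].

Ltac eqk_l l := first
  [ apply: (eqk (k := 1)); [by rewrite oner_eq0 | by field]
  | apply: (eqk (k := l)); [done | by field]
  | apply: (eqk (k := l^-1)); [by rewrite invr_eq0 | by field] ].

Lemma and4_iff23 (P Q R S P' Q' R' S' : Prop) : (P <-> P') -> (Q <-> R') -> (R <-> Q') -> (S <-> S') ->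
  ([/\ P, Q, R & S] <-> [/\ P', Q', R' & S']).
Proof. by move=> h1 h2 h3 h4; split => -[/h1 ? ? ? /h4 ?]; split => //; [apply/h3|apply/h2|apply/h2|apply/h3]. Qed.

Lemma Xset_gen g (v : V) : generator g -> nondeg v -> (Xset (g v) <-> Xset v).
Proof.
move=> hg nd; have ndg := gen_nondeg hg nd.
case: hg ndg => [->|->|->|[l hl ->]] ndg;
  rewrite /Xset ?crd_tau1 ?crd_tau2 ?crd_tau3 ?crd_gamma //=;
  [apply: and4_iff | apply: and4_iff23 | apply: and4_iff | apply: and4_iff]; try by split.
all: try eqk_tac.
all: eqk_l l.
Qed.

End E.

Section E2.
Variable K : numClosedFieldType.
Local Notation V := ('I_9 -> K).

Ltac eqk_tac := first
  [ apply: (eqk (k := 1)); [by rewrite oner_eq0 | by ring]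
  | apply: (eqk (k := -1)); [by rewrite oppr_eq0 oner_eq0 | by ring] ].

Ltac eqk_l l := first
  [ apply: (eqk (k := 1)); [by rewrite oner_eq0 | by field]
  | apply: (eqk (k := l)); [done | by field]
  | apply: (eqk (k := l^-1)); [by rewrite invr_eq0 | by field] ].

Lemma and3_iff23 (P Q R P' Q' R' : Prop) : (P <-> P') -> (Q <-> R') -> (R <-> Q') ->
  ([/\ P, Q & R] <-> [/\ P', Q' & R']).
Proof. by move=> h1 h2 h3; split => -[/h1 ? ? ?]; split => //; [apply/h3|apply/h2|apply/h2|apply/h3]. Qed.

Lemma Cset_gen g (v : V) : generator g -> nondeg v -> (Cset (g v) <-> Cset v).
Proof.
move=> hg nd; have ndg := gen_nondeg hg nd.
case: hg ndg => [->|->|->|[l hl ->]] ndg;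
  rewrite /Cset ?crd_tau1 ?crd_tau2 ?crd_tau3 ?crd_gamma //=.
- by split => -[_ [[e1 e2 e3] [e4 e5 e6]]]; do !split => //; apply/esym.
- split => -[_ [[e1 e2 e3] [e4 e5 e6]]]; (split; first done);
    (split; first by split => //; rewrite addrC).
  + move/eqP: e2; rewrite addrC addr_eq0 => /eqP e2.
    move/eqP: e3; rewrite addrC addr_eq0 => /eqP e3.
    move: e4 e5 e6; rewrite e2 e3 !mulrN => /eqP; rewrite eqr_opp => /eqP e4 /eqP; rewrite eqr_opp => /eqP e5 e6.
    by split => //; rewrite mulrC -e6 mulrC.
  + move/eqP: e2; rewrite addr_eq0 => /eqP e2.
    move/eqP: e3; rewrite addr_eq0 => /eqP e3.
    rewrite e2 e3 !mulrN e4 e5; split => //.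
    by rewrite [crd v 3 * _]mulrC [crd v 2 * _]mulrC e6.
- apply: and_iff; first by split.
  apply: and_iff; apply: and3_iff => //.
  by split => [/eqP|->]; rewrite ?oppr_eq0 ?oppr0 // => /eqP.
- apply: and_iff; first by split.
  apply: and_iff; apply: and3_iff; eqk_l l.
Qed.

Lemma C'set_gen g (v : V) : generator g -> nondeg v -> (C'set (g v) <-> C'set v).
Proof.
move=> hg nd; have hX := Xset_gen hg nd.
case: hg hX => [->|->|->|[l hl ->]] hX;
  rewrite /C'set ?crd_tau1 ?crd_tau2 ?crd_tau3 ?crd_gamma //=;
  [apply: and3_iff23 | apply: and3_iff | apply: and3_iff | apply: and3_iff] => //.
all: try eqk_tac.
all: eqk_l l.
Qed.

Lemma Cset_inv : G_invariant (Cset (K := K)).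
Proof. by apply: G_inv_of => g hg v nd; apply: Cset_gen. Qed.

Lemma C'set_inv : G_invariant (C'set (K := K)).
Proof. by apply: G_inv_of => g hg v nd; apply: C'set_gen. Qed.

End E2.

Section F.
Variable K : numClosedFieldType.
Local Notation V := ('I_9 -> K).
Local Notation mp := {mpoly K[9]}.

Definition mXk k : mp := 'X_(inord k).

Lemma meval_mX (v : V) k : (mXk k).@[v] = crd v k.
Proof. by rewrite /mXk mevalXU. Qed.

Lemma mh_mX k : (k < 9)%N -> mhom (k < 2)%N ((1 < k) && (k < 4))%N (3 < k)%N (mXk k).
Proof. exact: mhomX. Qed.

Lemma subr0_eq (a b : K) : a - b = 0 <-> a = b.
Proof. by split => [/eqP|->]; rewrite ?subrr // subr_eq0 => /eqP. Qed.

Definition Xpolys : seq mp :=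
  [:: mXk 0 * mXk 4 - mXk 1 * mXk 5; mXk 2 * mXk 6 - mXk 3 * mXk 7;
      mXk 8 * mXk 8 + (mXk 4 + mXk 6) * (mXk 5 + mXk 7)].

Lemma Xpolys_mh p : List.In p Xpolys -> multihom p.
Proof.
move=> /= [<-|[<-|[<-|[]]]].
- exact: (mhom_multihom (mhomB (mhomM (mh_mX (k:=0) isT) (mh_mX (k:=4) isT))
                                (mhomM (mh_mX (k:=1) isT) (mh_mX (k:=5) isT)))).
- exact: (mhom_multihom (mhomB (mhomM (mh_mX (k:=2) isT) (mh_mX (k:=6) isT))
                                (mhomM (mh_mX (k:=3) isT) (mh_mX (k:=7) isT)))).
- exact: (mhom_multihom (mhomD (mhomM (mh_mX (k:=8) isT) (mh_mX (k:=8) isT))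
     (mhomM (mhomD (mh_mX (k:=4) isT) (mh_mX (k:=6) isT)) (mhomD (mh_mX (k:=5) isT) (mh_mX (k:=7) isT))))).
Qed.

Lemma Xpolys_eval (v : V) : (forall p, List.In p Xpolys -> p.@[v] = 0) <->
  [/\ crd v 0 * crd v 4 = crd v 1 * crd v 5, crd v 2 * crd v 6 = crd v 3 * crd v 7 &
      crd v 8 ^+ 2 + (crd v 4 + crd v 6) * (crd v 5 + crd v 7) = 0].
Proof.
split.
  move=> h; have h1 := h _ (or_introl erefl); have h2 := h _ (or_intror (or_introl erefl)).
  have h3 := h _ (or_intror (or_intror (or_introl erefl))).
  move: h1 h2 h3; rewrite !(mevalB, mevalD, mevalM, meval_mX) => /subr0_eq h1 /subr0_eq h2 h3.
  by split => //; rewrite expr2.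
move=> [h1 h2 h3] p /= [<-|[<-|[<-|[]]]]; rewrite !(mevalB, mevalD, mevalM, meval_mX).
- by apply/subr0_eq.
- by apply/subr0_eq.
- by rewrite -expr2.
Qed.

Lemma Xset_closed : zclosed (Xset (K := K)).
Proof.
exists (fun p => List.In p Xpolys); split; first exact: Xpolys_mh.
move=> v; rewrite Xpolys_eval /Xset; split; first by case.
by case=> nd [h1 h2 h3].
Qed.

Definition Cpolys : seq mp :=
  [:: mXk 8; mXk 4 + mXk 6; mXk 5 + mXk 7; mXk 0 * mXk 6 - mXk 1 * mXk 7;
      mXk 2 * mXk 6 - mXk 3 * mXk 7; mXk 1 * mXk 2 - mXk 0 * mXk 3].

Lemma Cset_closed : zclosed (Cset (K := K)).
Proof.
exists (fun p => List.In p Cpolys); split.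
  move=> p /= [<-|[<-|[<-|[<-|[<-|[<-|[]]]]]]].
  - exact: (mhom_multihom (mh_mX (k:=8) isT)).
  - exact: (mhom_multihom (mhomD (mh_mX (k:=4) isT) (mh_mX (k:=6) isT))).
  - exact: (mhom_multihom (mhomD (mh_mX (k:=5) isT) (mh_mX (k:=7) isT))).
  - exact: (mhom_multihom (mhomB (mhomM (mh_mX (k:=0) isT) (mh_mX (k:=6) isT))
                                (mhomM (mh_mX (k:=1) isT) (mh_mX (k:=7) isT)))).
  - exact: (mhom_multihom (mhomB (mhomM (mh_mX (k:=2) isT) (mh_mX (k:=6) isT))
                                (mhomM (mh_mX (k:=3) isT) (mh_mX (k:=7) isT)))).
  - exact: (mhom_multihom (mhomB (mhomM (mh_mX (k:=1) isT) (mh_mX (k:=2) isT))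
                                (mhomM (mh_mX (k:=0) isT) (mh_mX (k:=3) isT)))).
move=> v; rewrite /Cset; split.
  move=> [nd [[e1 e2 e3] [e4 e5 e6]]]; split => // p /= [<-|[<-|[<-|[<-|[<-|[<-|[]]]]]]];
    rewrite !(mevalB, mevalD, mevalM, meval_mX) //; by apply/subr0_eq.
move=> [nd h]; split => //.
have h1 := h _ (or_introl erefl).
have h2 := h _ (or_intror (or_introl erefl)).
have h3 := h _ (or_intror (or_intror (or_introl erefl))).
have h4 := h _ (or_intror (or_intror (or_intror (or_introl erefl)))).
have h5 := h _ (or_intror (or_intror (or_intror (or_intror (or_introl erefl))))).
have h6 := h _ (or_intror (or_intror (or_intror (or_intror (or_intror (or_introl erefl)))))).
move: h1 h2 h3 h4 h5 h6; rewrite !(mevalB, mevalD, mevalM, meval_mX).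
by move=> h1 h2 h3 /subr0_eq h4 /subr0_eq h5 /subr0_eq h6.
Qed.

Lemma C'set_closed : zclosed (C'set (K := K)).
Proof.
exists (fun p => List.In p Xpolys \/ List.In p [:: mXk 4 - mXk 6; mXk 7 - mXk 5]); split.
  move=> p [/Xpolys_mh //|/= [<-|[<-|[]]]].
  - exact: (mhom_multihom (mhomB (mh_mX (k:=4) isT) (mh_mX (k:=6) isT))).
  - exact: (mhom_multihom (mhomB (mh_mX (k:=7) isT) (mh_mX (k:=5) isT))).
move=> v; rewrite /C'set /Xset; split.
  move=> [[nd e1 e2 e3] e4 e5]; split => // p [hp|].
    by move: p hp; apply/Xpolys_eval.
  by move=> /= [<-|[<-|[]]]; rewrite !(mevalB, meval_mX); apply/subr0_eq.
move=> [nd h]; have [e1 e2 e3] : [/\ crd v 0 * crd v 4 = crd v 1 * crd v 5, crd v 2 * crd v 6 = crd v 3 * crd v 7 &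
      crd v 8 ^+ 2 + (crd v 4 + crd v 6) * (crd v 5 + crd v 7) = 0].
  by apply/Xpolys_eval => p hp; apply: h; left.
have h4 := h _ (or_intror (or_introl erefl)).
have h5 := h _ (or_intror (or_intror (or_introl erefl))).
move: h4 h5; rewrite !(mevalB, meval_mX) => /subr0_eq h4 /subr0_eq h5.
by split.
Qed.

Lemma Cset_sub_X : psubset (Cset (K := K)) (Xset (K := K)).
Proof.
move=> v [nd [[e1 e2 e3] [e4 e5 e6]]]; split => //.
- move/eqP: e2; rewrite addr_eq0 => /eqP ->.
  move/eqP: e3; rewrite addr_eq0 => /eqP ->.
  by rewrite !mulrN e4.
- by rewrite e1 e2 e3 expr0n /= mul0r addr0.
Qed.

End F.

Section G.
Variable K : numClosedFieldType.
Local Notation V := ('I_9 -> K).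
Local Notation mp := {mpoly K[9]}.

Lemma horner1' (s : K) : (1 : {poly K}).[s] = 1.
Proof. by rewrite -polyC1 hornerC. Qed.

Ltac hsimp := rewrite ?hornerD ?hornerN ?hornerX ?horner1' ?hornerC ?hornerM ?hornerZ ?horner0 ?horner_exp.

Definition PC : 'I_9 -> {poly K} := fun i => nth 0 [:: 1; 'X; 1; 'X; -'X; -1; 'X; 1; 0] i.
Definition PC' : 'I_9 -> {poly K} := fun i => nth 0 [:: 'X; 1; 'X; 1; -1; -'X; 1; 'X; 0] i.

Lemma C_P s : Cset (ev PC s).
Proof.
split.
  by rewrite /nondeg /PC !crd_ev //= ?hornerN ?horner1' ?oppr_eq0 ?oner_eq0 /= ?orbT.
rewrite /PC !crd_ev //= !hornerE ?horner1'.
split; split; try ring.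
Qed.

Lemma C_P' s : Cset (ev PC' s).
Proof.
split.
  by rewrite /nondeg /PC' !crd_ev //= ?hornerN ?horner1' ?oppr_eq0 ?oner_eq0 /= ?orbT.
rewrite /PC' !crd_ev //= !hornerE ?horner1'.
split; split; try ring.
Qed.

Lemma C_h3 (v : V) : Cset v -> (exists s, peq (ev PC s) v) \/ peq (ev PC' 0) v.
Proof.
move=> [[n1 n2 n3] [[e1 e2 e3] [e4 e5 e6]]].
move/eqP: e2; rewrite addr_eq0 => /eqP hx.
move/eqP: e3; rewrite addr_eq0 => /eqP hy.
case: (eqVneq (crd v 7) 0) => ht.
- right.
  have hz : crd v 6 != 0.
    by apply/eqP => hz; move: n3; rewrite hx hy hz ht e1 oppr0 eqxx.
  have hu1 : crd v 0 = 0.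
    by move: e4; rewrite ht mulr0 => /eqP; rewrite mulf_eq0 (negbTE hz) orbF => /eqP.
  have hu2 : crd v 2 = 0.
    by move: e5; rewrite ht mulr0 => /eqP; rewrite mulf_eq0 (negbTE hz) orbF => /eqP.
  have hv1 : crd v 1 != 0 by move: n1; rewrite hu1 eqxx.
  have hv2 : crd v 3 != 0 by move: n2; rewrite hu2 eqxx.
  apply/peq_crd; exists (crd v 1), (crd v 3), (crd v 6); split => // k hk.
  case: k hk => [|[|[|[|[|[|[|[|[|//]]]]]]]]] _; rewrite /PC' crd_ev //= ; hsimp;
    by rewrite ?hu1 ?hu2 ?hx ?hy ?ht ?e1 ?oppr0 ?mulr0 ?mulr1 ?mulrN1.
- left; exists (crd v 6 / crd v 7).
  have hu1 : crd v 0 != 0.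
    apply/eqP => hu1; move: e4; rewrite hu1 mul0r => /esym/eqP; rewrite mulf_eq0 (negbTE ht) orbF => hv1.
    by move: n1; rewrite hu1 (eqP hv1) eqxx.
  have hu2 : crd v 2 != 0.
    apply/eqP => hu2; move: e5; rewrite hu2 mul0r => /esym/eqP; rewrite mulf_eq0 (negbTE ht) orbF => hv2.
    by move: n2; rewrite hu2 (eqP hv2) eqxx.
  apply/peq_crd; exists (crd v 0), (crd v 2), (crd v 7); split => // k hk.
  case: k hk => [|[|[|[|[|[|[|[|[|//]]]]]]]]] _; rewrite /PC crd_ev //= ; hsimp.
  + by rewrite mulr1.
  + by rewrite mulrA e4 mulfK.
  + by rewrite mulr1.
  + by rewrite mulrA e5 mulfK.
  + by rewrite hx; field.
  + by rewrite hy; ring.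
  + by field.
  + by rewrite mulr1.
  + by rewrite e1 mulr0.
Qed.

Lemma C_h4 (v : V) : Cset v -> (exists s, peq (ev PC' s) v) \/ peq (ev PC 0) v.
Proof.
move=> [[n1 n2 n3] [[e1 e2 e3] [e4 e5 e6]]].
move/eqP: e2; rewrite addr_eq0 => /eqP hx.
move/eqP: e3; rewrite addr_eq0 => /eqP hy.
case: (eqVneq (crd v 6) 0) => hz.
- right.
  have ht : crd v 7 != 0.
    by apply/eqP => ht; move: n3; rewrite hx hy hz ht e1 oppr0 eqxx.
  have hv1 : crd v 1 = 0.
    by move: e4; rewrite hz mulr0 => /esym/eqP; rewrite mulf_eq0 (negbTE ht) orbF => /eqP.
  have hv2 : crd v 3 = 0.
    by move: e5; rewrite hz mulr0 => /esym/eqP; rewrite mulf_eq0 (negbTE ht) orbF => /eqP.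
  have hu1 : crd v 0 != 0 by move: n1; rewrite hv1 eqxx orbF.
  have hu2 : crd v 2 != 0 by move: n2; rewrite hv2 eqxx orbF.
  apply/peq_crd; exists (crd v 0), (crd v 2), (crd v 7); split => // k hk.
  case: k hk => [|[|[|[|[|[|[|[|[|//]]]]]]]]] _; rewrite /PC crd_ev //= ; hsimp;
    by rewrite ?hv1 ?hv2 ?hx ?hy ?hz ?e1 ?oppr0 ?mulr0 ?mulr1 ?mulrN1.
- left; exists (crd v 7 / crd v 6).
  have hv1 : crd v 1 != 0.
    apply/eqP => hv1; move: e4; rewrite hv1 mul0r => /eqP; rewrite mulf_eq0 (negbTE hz) orbF => hu1.
    by move: n1; rewrite hv1 (eqP hu1) eqxx.
  have hv2 : crd v 3 != 0.
    apply/eqP => hv2; move: e5; rewrite hv2 mul0r => /eqP; rewrite mulf_eq0 (negbTE hz) orbF => hu2.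
    by move: n2; rewrite hv2 (eqP hu2) eqxx.
  apply/peq_crd; exists (crd v 1), (crd v 3), (crd v 6); split => // k hk.
  case: k hk => [|[|[|[|[|[|[|[|[|//]]]]]]]]] _; rewrite /PC' crd_ev //= ; hsimp.
  + by rewrite mulrA -e4 mulfK.
  + by rewrite mulr1.
  + by rewrite mulrA -e5 mulfK.
  + by rewrite mulr1.
  + by rewrite hx; ring.
  + by rewrite hy; field.
  + by rewrite mulr1.
  + by field.
  + by rewrite e1 mulr0.
Qed.

Lemma C_h5 s : s != 0 -> peq (ev PC s) (ev PC' s^-1).
Proof.
move=> hs; apply/peq_crd; exists s^-1, s^-1, s^-1; split; rewrite ?invr_eq0 // => k hk.
case: k hk => [|[|[|[|[|[|[|[|[|//]]]]]]]]] _; rewrite /PC /PC' !crd_ev //= ; hsimp; by field.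
Qed.

Lemma C_h6 : ~ peq (ev PC 0) (ev PC' 0).
Proof.
move/peq_crd => [a [b [c [ha _ _ h]]]]; move: (h 0%N isT).
rewrite /PC /PC' !crd_ev //= ; hsimp; rewrite ?mulr1 => /esym ha0.
by move: ha; rewrite ha0 eqxx.
Qed.

Lemma C_curve : irr_curve (Cset (K := K)).
Proof.
apply: (curve_irr_curve (P := PC) (P' := PC')).
- exact: Cset_closed.
- exact: C_P.
- exact: C_P'.
- exact: C_h3.
- exact: C_h4.
- exact: C_h5.
- exact: C_h6.
Qed.

Lemma C_unique (Z : pset K) : irr_curve Z -> psubset Z (Cset (K := K)) -> forall v, Z v <-> Cset v.
Proof.
move=> hZ hsub; apply: (curve_unique (P := PC) (P' := PC')) => //.
- exact: Cset_closed.
- exact: C_P.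
- exact: C_P'.
- exact: C_h3.
- exact: C_h4.
Qed.

End G.

Section H.
Variable K : numClosedFieldType.
Local Notation V := ('I_9 -> K).

Ltac hsimp := rewrite ?horner_exp ?hornerD ?hornerN ?hornerM ?hornerZ ?hornerX ?horner1' ?hornerC ?horner0.

Definition ci : K := 'i * 2.

Lemma ci2 : ci ^+ 2 = - 4.
Proof. by rewrite /ci exprMn sqrCi; ring. Qed.

Lemma ci_neq0 : ci != 0.
Proof. by rewrite /ci mulf_neq0 ?neq0Ci // pnatr_eq0. Qed.

Definition PD : 'I_9 -> {poly K} :=
  fun i => nth 0 [:: 1; 'X^2; 1; 'X^2; 'X^2; 1; 'X^2; 1; ci *: 'X] i.
Definition PD' : 'I_9 -> {poly K} :=
  fun i => nth 0 [:: 'X^2; 1; 'X^2; 1; 1; 'X^2; 1; 'X^2; ci *: 'X] i.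

Lemma D_P s : C'set (ev PD s).
Proof.
split; first split.
- by rewrite /nondeg /PD !crd_ev //= ?horner1' ?oner_eq0 /= ?orbT.
- by rewrite /PD !crd_ev //=; hsimp; ring.
- by rewrite /PD !crd_ev //=; hsimp; ring.
- rewrite /PD !crd_ev //=; hsimp.
  by rewrite exprMn ci2; ring.
- by rewrite /PD !crd_ev //=.
- by rewrite /PD !crd_ev //=.
Qed.

Lemma D_P' s : C'set (ev PD' s).
Proof.
split; first split.
- by rewrite /nondeg /PD' !crd_ev //= ?horner1' ?oner_eq0 /= ?orbT.
- by rewrite /PD' !crd_ev //=; hsimp; ring.
- by rewrite /PD' !crd_ev //=; hsimp; ring.
- rewrite /PD' !crd_ev //=; hsimp.
  by rewrite exprMn ci2; ring.
- by rewrite /PD' !crd_ev //=.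
- by rewrite /PD' !crd_ev //=.
Qed.

Lemma C'_w2 (v : V) : C'set v -> crd v 8 ^+ 2 = - (4 * (crd v 4 * crd v 5)).
Proof.
move=> [[_ _ _ e3] e4 e5]; move: e3; rewrite -e4 e5 => e3.
transitivity (crd v 8 ^+ 2 + (crd v 4 + crd v 4) * (crd v 5 + crd v 5) - 4 * (crd v 4 * crd v 5)).
  by ring.
by rewrite e3; ring.
Qed.

Lemma D_h3 (v : V) : C'set v -> (exists s, peq (ev PD s) v) \/ peq (ev PD' 0) v.
Proof.
move=> hv; have hw2 := C'_w2 hv.
move: hv => [[[n1 n2 n3] e1 e2 _] e4 e5].
case: (eqVneq (crd v 5) 0) => hy.
- right.
  have hw : crd v 8 = 0.
    by apply/eqP; move: hw2; rewrite hy !mulr0 oppr0 => /eqP; rewrite expf_eq0.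
  have hx : crd v 4 != 0.
    by apply/eqP => hx; move: n3; rewrite -e4 e5 hx hy hw eqxx.
  have hu1 : crd v 0 = 0.
    by move: e1; rewrite hy mulr0 => /eqP; rewrite mulf_eq0 (negbTE hx) orbF => /eqP.
  have hu2 : crd v 2 = 0.
    by move: e2; rewrite -e4 e5 hy mulr0 => /eqP; rewrite mulf_eq0 (negbTE hx) orbF => /eqP.
  have hv1 : crd v 1 != 0 by move: n1; rewrite hu1 eqxx.
  have hv2 : crd v 3 != 0 by move: n2; rewrite hu2 eqxx.
  apply/peq_crd; exists (crd v 1), (crd v 3), (crd v 4); split => // k hk.
  case: k hk => [|[|[|[|[|[|[|[|[|//]]]]]]]]] _; rewrite /PD' crd_ev //= ; hsimp;
    by rewrite ?hu1 ?hu2 ?e5 ?hy ?hw -?e4 ?expr0n /= ?mulr0 ?mulr1.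
- left.
  have hu1 : crd v 0 != 0.
    apply/eqP => hu1; move: e1; rewrite hu1 mul0r => /esym/eqP; rewrite mulf_eq0 (negbTE hy) orbF => hv1.
    by move: n1; rewrite hu1 (eqP hv1) eqxx.
  have hu2 : crd v 2 != 0.
    apply/eqP => hu2; move: e2; rewrite hu2 mul0r e5 => /esym/eqP; rewrite mulf_eq0 (negbTE hy) orbF => hv2.
    by move: n2; rewrite hu2 (eqP hv2) eqxx.
  set s := crd v 8 / (ci * crd v 5).
  have hs2 : s ^+ 2 = crd v 4 / crd v 5.
    rewrite /s expr_div_n hw2 exprMn ci2.
    by field.
  exists s; apply/peq_crd; exists (crd v 0), (crd v 2), (crd v 5); split => // k hk.
  case: k hk => [|[|[|[|[|[|[|[|[|//]]]]]]]]] _; rewrite /PD crd_ev //= ; hsimp.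
  + by rewrite mulr1.
  + by rewrite hs2 mulrA e1 mulfK.
  + by rewrite mulr1.
  + by rewrite hs2 mulrA e4 e2 e5 mulfK.
  + by rewrite hs2; field.
  + by rewrite mulr1.
  + by rewrite hs2 -e4; field.
  + by rewrite mulr1 e5.
  + rewrite /s; field.
    by rewrite hy ci_neq0.
Qed.

Lemma D_h4 (v : V) : C'set v -> (exists s, peq (ev PD' s) v) \/ peq (ev PD 0) v.
Proof.
move=> hv; have hw2 := C'_w2 hv.
move: hv => [[[n1 n2 n3] e1 e2 _] e4 e5].
case: (eqVneq (crd v 4) 0) => hx.
- right.
  have hw : crd v 8 = 0.
    by apply/eqP; move: hw2; rewrite hx !mul0r mulr0 oppr0 => /eqP; rewrite expf_eq0.
  have hy : crd v 5 != 0.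
    by apply/eqP => hy; move: n3; rewrite -e4 e5 hx hy hw eqxx.
  have hv1 : crd v 1 = 0.
    by move: e1; rewrite hx mulr0 => /esym/eqP; rewrite mulf_eq0 (negbTE hy) orbF => /eqP.
  have hv2 : crd v 3 = 0.
    by move: e2; rewrite -e4 e5 hx mulr0 => /esym/eqP; rewrite mulf_eq0 (negbTE hy) orbF => /eqP.
  have hu1 : crd v 0 != 0 by move: n1; rewrite hv1 eqxx orbF.
  have hu2 : crd v 2 != 0 by move: n2; rewrite hv2 eqxx orbF.
  apply/peq_crd; exists (crd v 0), (crd v 2), (crd v 5); split => // k hk.
  case: k hk => [|[|[|[|[|[|[|[|[|//]]]]]]]]] _; rewrite /PD crd_ev //= ; hsimp;
    by rewrite ?hv1 ?hv2 ?e5 ?hx ?hw -?e4 ?hx ?expr0n /= ?mulr0 ?mulr1.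
- left.
  have hv1 : crd v 1 != 0.
    apply/eqP => hv1; move: e1; rewrite hv1 mul0r => /eqP; rewrite mulf_eq0 (negbTE hx) orbF => hu1.
    by move: n1; rewrite hv1 (eqP hu1) eqxx.
  have hv2 : crd v 3 != 0.
    apply/eqP => hv2; move: e2; rewrite hv2 mul0r -e4 => /eqP; rewrite mulf_eq0 (negbTE hx) orbF => hu2.
    by move: n2; rewrite hv2 (eqP hu2) eqxx.
  set s := crd v 8 / (ci * crd v 4).
  have hs2 : s ^+ 2 = crd v 5 / crd v 4.
    rewrite /s expr_div_n hw2 exprMn ci2.
    by field.
  exists s; apply/peq_crd; exists (crd v 1), (crd v 3), (crd v 4); split => // k hk.
  case: k hk => [|[|[|[|[|[|[|[|[|//]]]]]]]]] _; rewrite /PD' crd_ev //= ; hsimp.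
  + by rewrite hs2 mulrA -e1 mulfK.
  + by rewrite mulr1.
  + by rewrite hs2 mulrA -e5 -e2 -e4 mulfK.
  + by rewrite mulr1.
  + by rewrite mulr1.
  + by rewrite hs2; field.
  + by rewrite mulr1 e4.
  + by rewrite hs2 e5; field.
  + rewrite /s; field.
    by rewrite hx ci_neq0.
Qed.

Lemma D_h5 s : s != 0 -> peq (ev PD s) (ev PD' s^-1).
Proof.
move=> hs; apply/peq_crd; exists (s ^- 2), (s ^- 2), (s ^- 2); split; rewrite ?invr_eq0 ?expf_neq0 // => k hk.
case: k hk => [|[|[|[|[|[|[|[|[|//]]]]]]]]] _; rewrite /PD /PD' !crd_ev //= ; hsimp; by field.
Qed.

Lemma D_h6 : ~ peq (ev PD 0) (ev PD' 0).
Proof.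
move/peq_crd => [a [b [c [ha _ _ h]]]]; move: (h 0%N isT).
rewrite /PD /PD' !crd_ev //= ; hsimp; rewrite expr0n /= mulr1 => /esym ha0.
by move: ha; rewrite ha0 eqxx.
Qed.

Lemma D_curve : irr_curve (C'set (K := K)).
Proof.
apply: (curve_irr_curve (P := PD) (P' := PD')).
- exact: C'set_closed.
- exact: D_P.
- exact: D_P'.
- exact: D_h3.
- exact: D_h4.
- exact: D_h5.
- exact: D_h6.
Qed.

Lemma D_unique (Z : pset K) : irr_curve Z -> psubset Z (C'set (K := K)) -> forall v, Z v <-> C'set v.
Proof.
move=> hZ hsub; apply: (curve_unique (P := PD) (P' := PD')) => //.
- exact: C'set_closed.
- exact: D_P.
- exact: D_P'.
- exact: D_h3.
- exact: D_h4.
Qed.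

End H.

Section I.
Variable K : numClosedFieldType.
Local Notation V := ('I_9 -> K).
Local Notation mp := {mpoly K[9]}.


Ltac hsimp := rewrite ?horner_exp ?hornerD ?hornerN ?hornerM ?hornerZ ?hornerX ?horner1' ?hornerC ?horner0.

Lemma gen_tau1 : generator (tau1 (K := K)). Proof. exact: Or41. Qed.
Lemma gen_tau2 : generator (tau2 (K := K)). Proof. exact: Or42. Qed.
Lemma gen_gamma (l : K) : l != 0 -> generator (gamma l). Proof. by move=> hl; apply: Or44; exists l. Qed.

Lemma two_neq0 : (2 : K) != 0.
Proof. by rewrite pnatr_eq0. Qed.

Lemma no_fixed (v : V) : ~ G_fixed_point v.
Proof.
move=> [[[n1 _ _] _ _ _] h].
have /peq_crd [a [b [c [ha hb hc hg]]]] := h _ (inG_gen (gen_gamma two_neq0)).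
have /peq_crd [a' [b' [c' [ha' hb' hc' ht]]]] := h _ (inG_gen gen_tau1).
move: (hg 0%N isT) (hg 1%N isT) (ht 0%N isT) (ht 1%N isT).
rewrite !crd_gamma // !crd_tau1 //= => g0 g1 t0 t1.
case: (eqVneq (crd v 0) 0) => hu.
  by move: n1; rewrite hu t0 hu mulr0 eqxx.
case: (eqVneq (crd v 1) 0) => hv.
  by move: n1; rewrite hv t1 hv mulr0 eqxx.
have ea : a = 2^-1 by apply: (mulIf hu); rewrite -g0.
have eb : a = 2 by apply: (mulIf hv); rewrite -g1.
have e : (2 : K) * 2 = 1 by rewrite -{1}eb ea mulVf // two_neq0.
have : ((2 * 2)%:R : K) == 1 by rewrite natrM e.
by rewrite pnatr_eq1.
Qed.

Definition Vk (k : nat) : pset K := fun v => nondeg v /\ crd v k = 0.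

Lemma Vk_closed k : (k < 9)%N -> zclosed (Vk k).
Proof.
move=> hk; exists (fun p => p = mXk K k); split.
  by move=> p ->; apply: (mhom_multihom (mh_mX hk)).
move=> v; split => [[nd h]|[nd h]]; split => //.
  by move=> p ->; rewrite meval_mX.
by rewrite -meval_mX; apply: h.
Qed.

Lemma irr_sub_U (Z Z1 Z2 : pset K) : zirreducible Z -> zclosed Z1 -> zclosed Z2 ->
  psubset Z (fun v => Z1 v \/ Z2 v) -> psubset Z Z1 \/ psubset Z Z2.
Proof. by case=> _ _ h; apply: h. Qed.

Section Classify.
Variable Z : pset K.
Hypothesis hZ : irr_curve Z.
Hypothesis hZX : psubset Z (Xset (K := K)).
Hypothesis hZG : G_invariant Z.

Lemma Zclosed : zclosed Z.
Proof. by case: hZ => -[]. Qed.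

Lemma Z_tau1 p : Z p -> Z (tau1 p).
Proof. by move=> Zp; apply/(hZG (inG_gen gen_tau1) (zclosed_nondeg Zclosed Zp)). Qed.
Lemma Z_tau2 p : Z p -> Z (tau2 p).
Proof. by move=> Zp; apply/(hZG (inG_gen gen_tau2) (zclosed_nondeg Zclosed Zp)). Qed.
Lemma Z_gamma l p : l != 0 -> Z p -> Z (gamma l p).
Proof. by move=> hl Zp; apply/(hZG (inG_gen (gen_gamma hl)) (zclosed_nondeg Zclosed Zp)). Qed.

Lemma not_sub_Vk k : (k < 4)%N -> ~ psubset Z (Vk k).
Proof.
move=> hk hsub; case: hZ => -[_ [p Zp] _] _ _.
have [[n1 n2 _] h1] := hsub p Zp.
have [_ h2] := hsub _ (Z_tau1 Zp).
move: h2; rewrite crd_tau1 ?(ltn_trans hk) //.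
case: k hk h1 {hsub} => [|[|[|[|//]]]] _ /= h1 h2.
- by move: n1; rewrite h1 h2 eqxx.
- by move: n1; rewrite h1 h2 eqxx.
- by move: n2; rewrite h1 h2 eqxx.
- by move: n2; rewrite h1 h2 eqxx.
Qed.

Lemma exists_good : exists p, [/\ Z p, crd p 0 != 0, crd p 1 != 0, crd p 2 != 0 & crd p 3 != 0].
Proof.
apply: NNPP => hno.
have hirr : zirreducible Z by case: hZ.
have hcov : psubset Z (fun v => Vk 0 v \/ (fun v => Vk 1 v \/ (fun v => Vk 2 v \/ Vk 3 v) v) v).
  move=> v Zv; have nd := zclosed_nondeg Zclosed Zv.
  case: (eqVneq (crd v 0) 0) => h0; first by left.
  case: (eqVneq (crd v 1) 0) => h1; first by right; left.
  case: (eqVneq (crd v 2) 0) => h2; first by right; right; left.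
  case: (eqVneq (crd v 3) 0) => h3; first by right; right; right.
  by case: hno; exists v.
have c k : (k < 9)%N -> zclosed (Vk k) by apply: Vk_closed.
case: (irr_sub_U hirr (c 0%N isT) (zclosedU (c 1%N isT) (zclosedU (c 2%N isT) (c 3%N isT))) hcov).
  exact: (not_sub_Vk (k := 0)).
move=> h; case: (irr_sub_U hirr (c 1%N isT) (zclosedU (c 2%N isT) (c 3%N isT)) h).
  exact: (not_sub_Vk (k := 1)).
move=> h'; case: (irr_sub_U hirr (c 2%N isT) (c 3%N isT) h').
  exact: (not_sub_Vk (k := 2)).
exact: (not_sub_Vk (k := 3)).
Qed.

End Classify.

End I.

Section I2.
Variable K : numClosedFieldType.
Local Notation V := ('I_9 -> K).
Local Notation mp := {mpoly K[9]}.

Ltac hsimp := rewrite ?(hornerXn, horner_exp, hornerD, hornerN, hornerM, hornerZ, hornerX, horner1', hornerC, horner0).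

Definition Porb (p : V) : 'I_9 -> {poly K} := fun i => nth 0
  [:: (crd p 0)%:P; crd p 1 *: 'X^2; (crd p 2)%:P; crd p 3 *: 'X^2; crd p 4 *: 'X^2;
      (crd p 5)%:P; crd p 6 *: 'X^2; (crd p 7)%:P; crd p 8 *: 'X] i.

Lemma gamma_orb (p : V) l : l != 0 -> peq (gamma l p) (ev (Porb p) l).
Proof.
move=> hl; apply/peq_crd; exists l, l, l; split => // k hk.
case: k hk => [|[|[|[|[|[|[|[|[|//]]]]]]]]] _; rewrite /Porb crd_ev // crd_gamma //=; hsimp;
  by field.
Qed.

Lemma orb1 (p : V) : peq (ev (Porb p) 1) p.
Proof.
apply/peq_crd; exists 1, 1, 1; split; rewrite ?oner_eq0 // => k hk.
case: k hk => [|[|[|[|[|[|[|[|[|//]]]]]]]]] _; rewrite /Porb crd_ev //=; hsimp;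
  by rewrite ?expr1n ?mulr1 ?mul1r.
Qed.

Lemma Ginv_apply (Z0 : pset K) g (v : V) : G_invariant Z0 -> inG g -> nondeg v -> Z0 v -> Z0 (g v).
Proof. by move=> h hg nd zv; apply/(h g hg v nd). Qed.

Lemma Cset_gamma (p : V) l : l != 0 -> Cset p -> Cset (gamma l p).
Proof.
move=> hl Cp.
exact: (Ginv_apply (@Cset_inv K) (inG_gen (gen_gamma hl)) (zclosed_nondeg (@Cset_closed K) Cp) Cp).
Qed.

Lemma C'set_gamma (p : V) l : l != 0 -> C'set p -> C'set (gamma l p).
Proof.
move=> hl Cp.
exact: (Ginv_apply (@C'set_inv K) (inG_gen (gen_gamma hl)) (zclosed_nondeg (@C'set_closed K) Cp) Cp).
Qed.

Lemma orb_sub (Zc : pset K) (p : V) : zclosed Zc -> (forall l, l != 0 -> Zc (gamma l p)) ->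
  psubset (cl (curveS (Porb p))) Zc.
Proof.
move=> hZc hg; apply: cl_min => // s [l hl ->].
exact: (zclosed_peq hZc (hg l hl) (gamma_orb p hl)).
Qed.

Lemma orb_f (p w : V) : cl (curveS (Porb p)) w -> crd p 6 * crd w 4 - crd p 4 * crd w 6 = 0.
Proof.
move=> [_ h].
have := h (crd p 6 *: mXk K 4 - crd p 4 *: mXk K 6).
rewrite mevalB !mevalZ !meval_mX; apply.
  exact: (mhom_multihom (mhomB (mhomZ (mh_mX (k := 4) isT)) (mhomZ (mh_mX (k := 6) isT)))).
move=> s [l hl ->]; rewrite mevalB !mevalZ !meval_mX /Porb !crd_ev //=; hsimp.
by ring.
Qed.

Section Classify2.
Variable Z : pset K.
Hypothesis hZ : irr_curve Z.
Hypothesis hZX : psubset Z (Xset (K := K)).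
Hypothesis hZG : G_invariant Z.

Lemma Z_sub_orb (p : V) : Z p -> crd p 0 != 0 -> crd p 1 != 0 -> psubset Z (cl (curveS (Porb p))).
Proof.
move=> Zp hu1 hv1.
have hZc := Zclosed hZ.
have inZ l : l != 0 -> Z (ev (Porb p) l).
  by move=> hl; apply: (zclosed_peq hZc (Z_gamma hZ hZG hl Zp) (gamma_orb p hl)).
have irr1 : zirreducible (cl (curveS (Porb p))).
  by apply: cl_curve_irr => s hs; apply: (zclosed_nondeg hZc (inZ s hs)).
have ndp := zclosed_nondeg hZc Zp.
have irr0 := cl_point_irr' ndp.
have pin : cl (curveS (Porb p)) p.
  apply: (cl_peq (s := ev (Porb p) 1)); last exact: orb1.
    by exists 1; rewrite ?oner_eq0.
  exact: (zclosed_nondeg hZc (inZ 1 (oner_neq0 _))).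
have sub01 : psubset (cl (fun w => List.In w [:: p])) (cl (curveS (Porb p))).
  by apply: cl_min; [exact: cl_closed | move=> s [<-|[]]].
have two0 : (2 : K) != 0 by rewrite pnatr_eq0.
have q2in : cl (curveS (Porb p)) (ev (Porb p) 2).
  apply: cl_in; first by exists 2.
  exact: (zclosed_nondeg hZc (inZ 2 two0)).
have q2out : ~ cl (fun w => List.In w [:: p]) (ev (Porb p) 2).
  move/cl_list => [].
    by move=> q [<-|[]].
  move=> q [[<-|[]]] /peq_crd [a [b [c [ha hb hc h]]]].
  move: (h 0%N isT) (h 1%N isT); rewrite /Porb !crd_ev //=; hsimp.
  rewrite ?mulr1 => h0 h1.
  have a1 : a = 1 by apply: (mulIf hu1); rewrite -h0 mul1r.
  move: h1; rewrite a1 mul1r => /eqP; rewrite -subr_eq0.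
  have -> : crd p 1 * 2 ^+ 2 - crd p 1 = crd p 1 * 3%:R by ring.
  by rewrite mulf_eq0 (negbTE hv1) pnatr_eq0.
case: hZ => _ _ hnc.
move=> v Zv; apply: NNPP => nv; apply: hnc.
exists (cl (fun w => List.In w [:: p])), (cl (curveS (Porb p))); split => //.
  by split => //; exists (ev (Porb p) 2).
split; last by exists v.
by apply: orb_sub => // l hl; apply: Z_gamma.
Qed.

End Classify2.

End I2.

Section I3.
Variable K : numClosedFieldType.
Local Notation V := ('I_9 -> K).

Lemma p_in_CC' (p : V) : Xset p -> crd p 0 != 0 -> crd p 1 != 0 -> crd p 2 != 0 -> crd p 3 != 0 ->
  crd p 6 * crd (tau1 p) 4 - crd p 4 * crd (tau1 p) 6 = 0 ->
  crd p 6 * crd (tau2 p) 4 - crd p 4 * crd (tau2 p) 6 = 0 -> Cset p \/ C'set p.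
Proof.
move=> Xp hu1 hv1 hu2 hv2; rewrite !crd_tau1 // !crd_tau2 //= => f1 f2.
have Xp' := Xp; case: Xp' => nd e1 e2 e3.
case: (eqVneq (crd p 6) (crd p 4)) => hzx.
- right; split => //.
  case: (eqVneq (crd p 4) 0) => hx.
  + have hz : crd p 6 = 0 by rewrite hzx.
    have hy : crd p 5 = 0.
      by move: e1; rewrite hx mulr0 => /esym/eqP; rewrite mulf_eq0 (negbTE hv1) => /eqP.
    have ht : crd p 7 = 0.
      by move: e2; rewrite hz mulr0 => /esym/eqP; rewrite mulf_eq0 (negbTE hv2) => /eqP.
    by rewrite hy ht.
  + move: f1; rewrite hzx -mulrBr => /eqP; rewrite mulf_eq0 (negbTE hx) /= subr_eq0 => /eqP.
    by [].
- left.
  have hzx' : crd p 6 = - crd p 4.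
    move: f2 => /eqP; rewrite -subr_eq0.
    have -> : crd p 6 * crd p 6 - crd p 4 * crd p 4 - 0 = (crd p 6 - crd p 4) * (crd p 6 + crd p 4) by ring.
    rewrite mulf_eq0 subr_eq0 (negbTE hzx) /= addr_eq0 => /eqP.
    by [].
  have hx : crd p 4 != 0.
    by apply/eqP => hx; move: hzx; rewrite hzx' hx oppr0 eqxx.
  have hz : crd p 6 != 0 by rewrite hzx' oppr_eq0.
  have hyt : crd p 5 + crd p 7 = 0.
    move: f1; rewrite hzx'.
    have -> : - crd p 4 * crd p 5 - crd p 4 * crd p 7 = - (crd p 4 * (crd p 5 + crd p 7)) by ring.
    move/eqP; rewrite oppr_eq0 mulf_eq0 (negbTE hx) /= => /eqP.
    by [].
  have hxz : crd p 4 + crd p 6 = 0 by rewrite hzx' subrr.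
  have hw : crd p 8 = 0.
    by apply/eqP; move: e3; rewrite hxz mul0r addr0 => /eqP; rewrite expf_eq0.
  have ht : crd p 7 = - crd p 5.
    by apply/eqP; rewrite -addr_eq0 addrC hyt.
  have e4 : crd p 0 * crd p 6 = crd p 1 * crd p 7.
    by rewrite hzx' ht mulrN e1 mulrN.
  split => //; split; split => //.
  apply: (mulIf hz).
  transitivity (crd p 1 * (crd p 2 * crd p 6)); first by ring.
  rewrite e2.
  transitivity (crd p 0 * crd p 6 * crd p 3); last by ring.
  by rewrite e4; ring.
Qed.

Lemma classify (Z : pset K) : irr_curve Z -> psubset Z (Xset (K := K)) -> G_invariant Z ->
  peqset Z (Cset (K := K)) \/ peqset Z (C'set (K := K)).
Proof.
move=> hZ hZX hZG.
have [p [Zp hu1 hv1 hu2 hv2]] := exists_good hZ hZG.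
have hsub := Z_sub_orb hZ hZG Zp hu1 hv1.
have f1 := orb_f (hsub _ (Z_tau1 hZ hZG Zp)).
have f2 := orb_f (hsub _ (Z_tau2 hZ hZG Zp)).
case: (p_in_CC' (hZX _ Zp) hu1 hv1 hu2 hv2 f1 f2) => [Cp|Cp].
  left => v; apply: C_unique hZ _ v => w Zw.
  exact: (orb_sub (@Cset_closed K) (fun l hl => Cset_gamma hl Cp) (hsub w Zw)).
right => v; apply: D_unique hZ _ v => w Zw.
exact: (orb_sub (@C'set_closed K) (fun l hl => C'set_gamma hl Cp) (hsub w Zw)).
Qed.

Theorem main_gen :
  (~ exists v : V, G_fixed_point v) /\
  (forall Z : pset K,
     (irr_curve Z /\ psubset Z (Xset (K := K)) /\ G_invariant Z) <->
     (peqset Z (Cset (K := K)) \/ peqset Z (C'set (K := K)))).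
Proof.
split; first by move=> [v]; apply: no_fixed.
move=> Z; split.
  by move=> [hZ [hZX hZG]]; apply: classify.
case=> h; rewrite (pset_ext h); split.
- exact: C_curve.
- by split; [exact: Cset_sub_X | exact: Cset_inv].
- exact: D_curve.
- by split; [move=> v [] | exact: C'set_inv].
Qed.

End I3.

Theorem lemma4p16 (R : realType) :
  (~ exists v : 'I_9 -> R[i], G_fixed_point v) /\
  (forall Z : pset R[i],
     (irr_curve Z /\ psubset Z (Xset (K:=R[i])) /\ G_invariant Z) <->
     (peqset Z (Cset (K:=R[i])) \/ peqset Z (C'set (K:=R[i])))).
Proof. exact: (main_gen (R[i])). Qed.
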